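(* A finite groupoid $\langle A;\cdot\rangle$ with an identity element is an Abelian algebra if and only if it is a commutative group.
   Context: A groupoid is an algebra $\langle A;\cdot\rangle$ with one binary operation; an identity element is $1\in A$ with $1\cdot a=a\cdot 1=a$ for all $a$. A polynomial operation of an algebra is an operation obtained from a term by substituting elements of the algebra for some of its variables. An algebra is called Abelian if for every polynomial operation $t(x,y_1,\ldots,y_n)$ and all elements $u,v,c_1,\ldots,c_n,d_1,\ldots,d_n$ of the algebra, $t(u,c_1,\ldots,c_n)=t(u,d_1,\ldots,d_n)$ implies $t(v,c_1,\ldots,c_n)=t(v,d_1,\ldots,d_n)$. *)

(* Defs.v *)
From mathcomp Require Import all_boot.
Set Implicit Arguments. Unset Strict Implicit. Unset Printing Implicit Defensive.

(* Terms in the language of one binary operation, with variables indexed by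
   nat and constants from the carrier (so evaluated terms give exactly the
   polynomial operations). *)
Inductive gterm (A : Type) : Type :=
| GVar : nat -> gterm A
| GConst : A -> gterm A
| GOp : gterm A -> gterm A -> gterm A.

Fixpoint geval (A : Type) (op : A -> A -> A) (env : nat -> A) (t : gterm A) : A :=
  match t with
  | GVar i => env i
  | GConst a => a
  | GOp t1 t2 => op (geval op env t1) (geval op env t2)
  end.

(* environment x |-> u (variable 0), y_i |-> c i (variables i >= 1) *)
Definition scons (A : Type) (u : A) (c : nat -> A) : nat -> A :=
  fun i => match i with 0 => u | S j => c j end.

Definition abelian_groupoid (A : Type) (op : A -> A -> A) : Prop :=
  forall (t : gterm A) (u v : A) (c d : nat -> A),
    geval op (scons u c) t = geval op (scons u d) t ->
    geval op (scons v c) t = geval op (scons v d) t.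

Definition is_identity (A : Type) (op : A -> A -> A) (e : A) : Prop :=
  forall a, op e a = a /\ op a e = a.

Definition is_comm_group (A : Type) (op : A -> A -> A) (e : A) : Prop :=
  (forall a b c, op a (op b c) = op (op a b) c) /\
  (forall a b, op a b = op b a) /\
  is_identity op e /\
  (forall a, exists b, op a b = e /\ op b a = e).

(* Main.v *)
Require Import Defs.
From mathcomp Require Import all_boot.

Fixpoint gdeg {A : Type} (t : gterm A) : nat :=
  match t with
  | GVar 0 => 1
  | GVar _ => 0
  | GConst _ => 0
  | GOp t1 t2 => (gdeg t1 + gdeg t2)%N
  end.

Section CG.
Variables (A : Type) (op : A -> A -> A) (e : A).
Hypothesis assoc : forall a b c, op a (op b c) = op (op a b) c.
Hypothesis comm : forall a b, op a b = op b a.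
Hypothesis he : is_identity op e.

Definition pw (u : A) (k : nat) := iter k (op u) e.

Lemma pw_add u m n : op (pw u m) (pw u n) = pw u (m + n).
Proof.
elim: m => [|m IH] /=; first by rewrite /pw /= (proj1 (he _)).
by rewrite /pw /= -assoc; rewrite /pw in IH; rewrite IH.
Qed.

Lemma swap4 a b c d : op (op a b) (op c d) = op (op a c) (op b d).
Proof.
rewrite -!assoc; congr (op a _).
by rewrite !assoc (comm b c).
Qed.

Lemma geval_split u c t :
  geval op (scons u c) t = op (pw u (gdeg t)) (geval op (scons e c) t).
Proof.
elim: t => [[|j]|a|t1 IH1 t2 IH2] /=.
- by rewrite /pw /= (proj2 (he _)) (proj2 (he _)).
- by rewrite /pw /= (proj1 (he _)).
- by rewrite /pw /= (proj1 (he _)).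
- by rewrite IH1 IH2 swap4 pw_add.
Qed.
End CG.

Theorem mainTheorem2 (A : finType) (op : A -> A -> A) (e : A)
  (he : is_identity op e) :
  abelian_groupoid op <-> is_comm_group op e.
Proof.
split.
- move=> H.
  have comm : forall a b, op a b = op b a.
    move=> a b.
    pose t := GOp (GOp (GVar A 1) (GVar A 0)) (GVar A 2).
    pose c := fun i : nat => match i with 0 => a | _ => e end.
    pose d := fun i : nat => match i with 0 => e | _ => a end.
    have := H t e b c d; rewrite /=.
    rewrite ?(proj1 (he _)) ?(proj2 (he _)); apply; by [].
  have aux : forall a b c', op (op a b) c' = op b (op a c').
    move=> a b c'.
    pose t := GOp (GOp (GVar A 1) (GVar A 0)) (GVar A 2).
    pose c := fun i : nat => match i with 0 => a | _ => c' end.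
    pose d := fun i : nat => match i with 0 => e | _ => op a c' end.
    have := H t e b c d; rewrite /=.
    rewrite ?(proj1 (he _)) ?(proj2 (he _)); apply; by [].
  have assoc : forall a b c, op a (op b c) = op (op a b) c.
    move=> a b c.
    rewrite (comm a (op b c)) (comm b c) aux (comm c a) -aux //.
  split; first exact: assoc.
  split; first exact: comm.
  split; first exact: he.
  move=> a.
  have inj : injective (op a).
    move=> b b' hb.
    pose t := GOp (GVar A 0) (GVar A 1).
    have := H t a e (fun _ => b) (fun _ => b') hb; rewrite /=.
    by rewrite !(proj1 (he _)).
  have /codomP [b hb] := injF_onto inj e.
  exists b; split; first by [].
  by rewrite comm.
- move=> [assoc [comm [_ inv]]] t u v c d.
  rewrite (@geval_split _ _ _ assoc comm he u c t) (@geval_split _ _ _ assoc comm he u d t).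
  rewrite (@geval_split _ _ _ assoc comm he v c t) (@geval_split _ _ _ assoc comm he v d t).
  move=> h.
  have [w [_ hw]] := inv (pw A op e u (gdeg t)).
  have : geval op (scons e c) t = geval op (scons e d) t.
    set g1 := geval op (scons e c) t. set g2 := geval op (scons e d) t.
    move: h; rewrite -/g1 -/g2 => h.
    rewrite -(proj1 (he g1)) -(proj1 (he g2)) -hw -!assoc h //.
  by move=> ->.
Qed.
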